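(* Let $M,N\in\mathbb{S}^{q+r}$. If there exists a real $\alpha\ge 0$ such that $M-\alpha N>0$, then $\mathcal{Z}_r(N)\subseteq\mathcal{Z}_r^+(M)$. Moreover, if $N\in\boldsymbol{\Pi}_{q,r}$ and $N_{22}<0$, then $\mathcal{Z}_r(N)\subseteq\mathcal{Z}_r^+(M)$ if and only if there exists a real $\alpha\ge 0$ such that $M-\alpha N>0$.
   Context: $\mathbb{S}^k$ denotes the real symmetric $k\times k$ matrices; for symmetric matrices, $A\ge 0$ ($A>0$) means positive semidefinite (definite), $A<0$ negative definite. $A^\dagger$ is the Moore–Penrose pseudo-inverse. Any $N\in\mathbb{S}^{q+r}$ is partitioned as $N=\begin{bmatrix}N_{11}&N_{12}\\ N_{21}&N_{22}\end{bmatrix}$ with $N_{11}\in\mathbb{S}^q$, $N_{22}\in\mathbb{S}^r$. The generalized Schur complement is $N\mid N_{22}:=N_{11}-N_{12}N_{22}^\dagger N_{21}$. The set $\boldsymbol{\Pi}_{q,r}$ consists of all $N\in\mathbb{S}^{q+r}$ with $N_{22}\le 0$, $N\mid N_{22}\ge 0$ and $\ker N_{22}\subseteq\ker N_{12}$. Define $\mathcal{Z}_r(\Pi)=\{Z\in\mathbb{R}^{r\times q}:\begin{bmatrix}I_q\\ Z\end{bmatrix}^\top\Pi\begin{bmatrix}I_q\\ Z\end{bmatrix}\ge 0\}$ and $\mathcal{Z}_r^+(\Pi)$ the same with $>0$. *)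

(* Defs.v *)
From HB Require Import structures.
From mathcomp Require Import all_boot all_order all_algebra.
From mathcomp Require Import boolp classical_sets reals.
Set Implicit Arguments. Unset Strict Implicit. Unset Printing Implicit Defensive.
Import Order.TTheory GRing.Theory Num.Theory.
Local Open Scope ring_scope.

Section Defs.
Variable R : realType.

Definition symmx n (A : 'M[R]_n) : Prop := A^T = A.
Definition psdmx n (A : 'M[R]_n) : Prop :=
  forall x : 'cV[R]_n, 0 <= (x^T *m A *m x) 0 0.
Definition pdmx n (A : 'M[R]_n) : Prop :=
  forall x : 'cV[R]_n, x != 0 -> 0 < (x^T *m A *m x) 0 0.
Definition ndmx n (A : 'M[R]_n) : Prop :=
  forall x : 'cV[R]_n, x != 0 -> (x^T *m A *m x) 0 0 < 0.

Definition is_mpinv m n (A : 'M[R]_(m, n)) (X : 'M[R]_(n, m)) : Prop :=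
  [/\ A *m X *m A = A, X *m A *m X = X,
      (A *m X)^T = A *m X & (X *m A)^T = X *m A].
(* Moore-Penrose pseudo-inverse (the unique matrix satisfying the Penrose conditions) *)
Definition mpinv m n (A : 'M[R]_(m, n)) : 'M[R]_(n, m) :=
  xget 0 [set X | is_mpinv A X].

Definition gschur q r (N : 'M[R]_(q + r)) : 'M[R]_q :=
  ulsubmx N - ursubmx N *m mpinv (drsubmx N) *m dlsubmx N.

Definition PiSet q r (N : 'M[R]_(q + r)) : Prop :=
  [/\ symmx N, psdmx (- drsubmx N), psdmx (gschur N) &
      forall x : 'cV[R]_r, drsubmx N *m x = 0 -> ursubmx N *m x = 0].

Definition stackI q r (Z : 'M[R]_(r, q)) : 'M[R]_(q + r, q) := col_mx 1%:M Z.

Definition Zset q r (P : 'M[R]_(q + r)) (Z : 'M[R]_(r, q)) : Prop :=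
  psdmx ((stackI Z)^T *m P *m stackI Z).
Definition Zplus q r (P : 'M[R]_(q + r)) (Z : 'M[R]_(r, q)) : Prop :=
  pdmx ((stackI Z)^T *m P *m stackI Z).
End Defs.

(* Main.v *)
Require Import Defs.
From HB Require Import structures.
From mathcomp Require Import all_boot all_order all_algebra.
From mathcomp Require Import boolp classical_sets reals.
From mathcomp Require Import topology normedtype derive.
From mathcomp Require Import matrix_normedtype.
From mathcomp Require Import ring lra.
Import Order.TTheory GRing.Theory Num.Theory.
Import numFieldNormedType.Exports.
Local Open Scope ring_scope.
Local Open Scope classical_set_scope.
Set Implicit Arguments. Unset Strict Implicit.

Section An.
Variable R : realType.

Definition qr k (A : 'M[R]_k) (w : 'rV[R]_k) : R := (w *m A *m w^T) 0 0.

Lemma cont_sum (T : topologicalType) (I : Type) (r : seq I) (F : I -> T -> R) :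
  (forall i, continuous (F i)) -> continuous (fun w => \sum_(i <- r) F i w).
Proof.
move=> H; elim: r => [|a r IH] x.
  under eq_fun do rewrite big_nil. exact: cvg_cst.
under eq_fun do rewrite big_cons.
exact: (@continuousD _ R^o _ (F a) (fun w => \sum_(i <- r) F i w) x (H a x) (IH x)).
Qed.

Lemma qr_cont k (A : 'M[R]_k) : continuous (qr A).
Proof.
have -> : qr A = fun w => \sum_j (\sum_i w 0 i * A i j) * w 0 j.
  apply: funext => w; rewrite /qr mxE.
  apply: eq_bigr => j _; rewrite !mxE; congr (_ * _).
apply: cont_sum => j x.
apply: (continuousM (s := fun w : 'rV[R]_k => \sum_i w 0 i * A i j) (t := fun w : 'rV[R]_k => w 0 j)).
  apply: cont_sum => i y.
  apply: (continuousM (s := fun w : 'rV[R]_k => w 0 i) (t := fun w : 'rV[R]_k => A i j)).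
    exact: coord_continuous.
  exact: cst_continuous.
exact: coord_continuous.
Qed.
Arguments qr_cont {k} A.

Lemma min_on_sphere k (f g : 'rV[R]_k -> R) : continuous f -> continuous g ->
  (forall w, `|w| = 1 -> 0 <= g w -> 0 < f w) ->
  exists2 c, 0 < c & forall w, `|w| = 1 -> 0 <= g w -> c <= f w.
Proof.
move=> cf cg H.
pose A := [set w : 'rV[R]_k | `|w| = 1 /\ 0 <= g w].
have [A0|A0] := pselect (A !=set0); last first.
  by exists 1 => // w w1 gw; exfalso; apply: A0; exists w.
have cA : compact A.
  apply: bounded_closed_compact.
    exists 1; split => // M M1 w [/= -> _]; exact/ltW.
  apply: closedI.
    apply: (@preimage_closed _ _ (fun w : 'rV[R]_k => `|w|) [set 1]).
      by move=> x _; apply: norm_continuous.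
    exact: closed_eq.
  apply: (@preimage_closed _ _ g [set x | 0 <= x]); last exact: closed_ge.
  by move=> x _; apply: cg.
have [c cA' cmin] := EVT_min_rV A0 cA (continuous_subspaceT cf).
move: (cA'); rewrite inE => -[c1 gc].
exists (f c); first exact: H.
by move=> w w1 gw; apply: cmin; rewrite inE.
Qed.


Lemma max_on_sphere k (f : 'rV[R]_k -> R) : continuous f ->
  exists D, forall w, `|w| = 1 -> f w <= D.
Proof.
move=> cf.
pose A := [set w : 'rV[R]_k | `|w| = 1].
have [A0|A0] := pselect (A !=set0); last first.
  by exists 0 => w w1; exfalso; apply: A0; exists w.
have cA : compact A.
  apply: bounded_closed_compact.
    exists 1; split => // M M1 w /= ->; exact/ltW.
  apply: (@preimage_closed _ _ (fun w : 'rV[R]_k => `|w|) [set 1]).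
    by move=> x _; apply: norm_continuous.
  exact: closed_eq.
have [c cA' cmax] := EVT_max_rV A0 cA (continuous_subspaceT cf).
by exists (f c) => w w1; apply: cmax; rewrite inE.
Qed.

Definition bl k (A : 'M[R]_k) (u v : 'rV[R]_k) : R := (u *m A *m v^T) 0 0.

Lemma qrZ k (A : 'M[R]_k) t w : qr A (t *: w) = t ^+ 2 * qr A w.
Proof.
by rewrite /qr linearZ /= -!scalemxAl -scalemxAr scalerA mxE expr2.
Qed.

Lemma qrD k (A : 'M[R]_k) u v :
  qr A (u + v) = qr A u + (bl A u v + bl A v u) + qr A v.
Proof.
rewrite /qr /bl linearD /= !mulmxDl !mulmxDr !mxE; ring.
Qed.

Lemma qrN k (A : 'M[R]_k) w : qr A (- w) = qr A w.
Proof. by rewrite -scaleN1r qrZ sqrrN expr1n mul1r. Qed.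

Lemma blN k (A : 'M[R]_k) u v : bl A u (- v) = - bl A u v.
Proof. by rewrite /bl linearN /= mulmxN mxE. Qed.

Lemma blNl k (A : 'M[R]_k) u v : bl A (- u) v = - bl A u v.
Proof. by rewrite /bl mulNmx mulNmx mxE. Qed.

Lemma qrB k (A B : 'M[R]_k) (a : R) w : qr (A - a *: B) w = qr A w - a * qr B w.
Proof.
by rewrite /qr mulmxBr mulmxBl -scalemxAr -scalemxAl !mxE.
Qed.

Lemma blB k (A B : 'M[R]_k) (a : R) u v : bl (A - a *: B) u v = bl A u v - a * bl B u v.
Proof.
by rewrite /bl mulmxBr mulmxBl -scalemxAr -scalemxAl !mxE.
Qed.

Lemma qr0 k (A : 'M[R]_k) : qr A 0 = 0.
Proof. by rewrite /qr mul0mx mul0mx mxE. Qed.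

Lemma qr1_gt0 k (w : 'rV[R]_k) : w != 0 -> 0 < qr 1 w.
Proof.
move=> w0; rewrite /qr mulmx1 mxE.
have H : forall i, 0 <= w 0 i * w^T i 0 by move=> i; rewrite mxE -expr2 sqr_ge0.
rewrite lt_def sumr_ge0 ?andbT // psumr_eq0 //; apply/negP => /allP A.
apply/negP: w0; rewrite negbK.
apply/eqP/matrixP => i j; rewrite ord1 mxE.
have := A j (mem_index_enum _); rewrite mxE -expr2 sqrf_eq0 => /eqP //.
Qed.

Lemma sphere_decomp k (w : 'rV[R]_k) : w != 0 ->
  exists2 z, `|z| = 1 & exists2 t, 0 < t & w = t *: z.
Proof.
move=> w0; have nw : 0 < `|w| by rewrite normr_gt0.
exists (`|w|^-1 *: w).
  by rewrite normrZ normfV normr_id mulVf // gt_eqF.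
by exists `|w| => //; rewrite scalerA divff ?scale1r // gt_eqF.
Qed.

Lemma sphere_pos k (A : 'M[R]_k) :
  (forall w, `|w| = 1 -> 0 < qr A w) -> forall w, w != 0 -> 0 < qr A w.
Proof.
move=> H w /sphere_decomp [z z1 [t t0 ->]].
by rewrite qrZ mulr_gt0 ?exprn_gt0 // H.
Qed.

Lemma sphere_cond k (A N : 'M[R]_k) :
  (forall w, `|w| = 1 -> 0 <= qr N w -> 0 < qr A w) ->
  forall w, w != 0 -> 0 <= qr N w -> 0 < qr A w.
Proof.
move=> H w /sphere_decomp [z z1 [t t0 ->]].
rewrite !qrZ pmulr_rge0 ?exprn_gt0 // => Nz.
by rewrite mulr_gt0 ?exprn_gt0 // H.
Qed.

Lemma root_pos (a b c0 : R) : a < 0 -> 0 < c0 ->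
  exists2 t, 0 < t & c0 + t * b + t ^+ 2 * a = 0.
Proof.
move=> a0 c00.
have D0 : 0 <= b ^+ 2 - 4 * a * c0 by nra.
set s := Num.sqrt (b ^+ 2 - 4 * a * c0).
have s2 : s ^+ 2 = b ^+ 2 - 4 * a * c0 by rewrite sqr_sqrtr.
have s0 : 0 <= s by rewrite sqrtr_ge0.
have bs : 0 < b + s by nra.
exists ((b + s) / (- (2 * a))).
  by rewrite divr_gt0 // oppr_gt0; nra.
have a0' : a != 0 by rewrite lt_eqF.
have E : (4 * a) * (c0 + (b + s) / - (2 * a) * b + ((b + s) / - (2 * a)) ^+ 2 * a)
   = s ^+ 2 - (b ^+ 2 - 4 * a * c0) by field.
move: E; rewrite s2 subrr => /eqP; rewrite mulf_eq0 => /orP [|/eqP //].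
by move=> /eqP; nra.
Qed.

Lemma blZr k (A : 'M[R]_k) u v t : bl A u (t *: v) = t * bl A u v.
Proof. by rewrite /bl linearZ /= -scalemxAr mxE. Qed.

Lemma blZl k (A : 'M[R]_k) u v t : bl A (t *: u) v = t * bl A u v.
Proof. by rewrite /bl -!scalemxAl mxE. Qed.

Lemma twoD k (M N : 'M[R]_k) :
  (forall w, 0 <= qr N w -> 0 <= qr M w) ->
  forall u v, 0 < qr N u -> qr N v < 0 -> qr M v / qr N v <= qr M u / qr N u.
Proof.
move=> H u v nu nv; set l := qr M u / qr N u.
rewrite leNgt; apply/negP => lt.
pose G := M - l *: N.
have gu : qr G u = 0 by rewrite /G qrB /l divfK ?subrr // gt_eqF.
have gv : qr G v < 0.
  rewrite /G qrB.
  have -> : qr M v = (qr M v / qr N v) * qr N v by rewrite divfK // lt_eqF.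
  move: lt; set rho := qr M v / qr N v => lt; nra.
have key : forall v', qr N v' = qr N v -> qr G v' < 0 ->
    bl G u v' + bl G v' u <= 0 -> False.
  move=> v' nv' gv' bg.
  have nv'' : qr N v' < 0 by rewrite nv'.
  have [t t0 rt] := root_pos (bl N u v' + bl N v' u) nv'' nu.
  pose w := u + t *: v'.
  have nw : qr N w = 0 by rewrite /w qrD blZr blZl qrZ -rt nv'; ring.
  have := H w; rewrite nw lexx => /(_ isT).
  have -> : qr M w = qr G w + l * qr N w by rewrite /G qrB; ring.
  rewrite nw mulr0 addr0 /w qrD blZr blZl qrZ gu.
  have : t * (bl G u v' + bl G v' u) <= 0 by rewrite pmulr_rle0.
  have : t ^+ 2 * qr G v' < 0 by rewrite pmulr_rlt0 ?exprn_gt0.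
  lra.
have [bg|bg] := lerP (bl G u v + bl G v u) 0.
  exact: (key v).
apply: (key (- v)); rewrite ?qrN // blN blNl; lra.
Qed.

Lemma sphere_neq0 k (w : 'rV[R]_k) : `|w| = 1 -> w != 0.
Proof.
move=> w1; apply/eqP => w0; move: w1; rewrite w0 normr0 => /eqP.
by rewrite eq_sym oner_eq0.
Qed.

Lemma Slemma_rV k (M N : 'M[R]_k) :
  (forall w, w != 0 -> 0 <= qr N w -> 0 < qr M w) ->
  exists a, 0 <= a /\ forall w, w != 0 -> 0 < qr (M - a *: N) w.
Proof.
move=> H.
have [c c0 Hc] := min_on_sphere (qr_cont M) (qr_cont N)
  (fun w w1 => H w (sphere_neq0 w1)).
have [Dh HD] := max_on_sphere (qr_cont (1 : 'M[R]_k)).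
pose e := c / (`|Dh| + 1).
have Dh1 : 0 < `|Dh| + 1 by rewrite ltr_wpDl.
have e0 : 0 < e by rewrite divr_gt0.
have eD : e * (`|Dh| + 1) = c by rewrite /e divfK // gt_eqF.
pose M' := M - e *: (1%:M : 'M[R]_k).
have H1 : forall w, `|w| = 1 -> 0 <= qr N w -> 0 < qr M' w.
  move=> w w1 nw; rewrite /M' qrB.
  have := Hc w w1 nw; have := HD w w1; have := ler_norm Dh.
  move=> h1 h2 h3.
  have : e * qr 1 w <= e * `|Dh| by rewrite ler_pM2l //; exact: le_trans h2 h1.
  nra.
have H2 := sphere_cond H1.
have H3 : forall w, 0 <= qr N w -> 0 <= qr M' w.
  move=> w nw; have [->|w0] := eqVneq w 0; first by rewrite qr0.
  exact/ltW/H2.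
have Hneg : forall w, `|w| = 1 -> 0 <= - qr M' w -> 0 < - qr N w.
  move=> w w1 mw; rewrite oppr_gt0 ltNge; apply/negP => nw.
  have := H1 w w1 nw; lra.
have [d d0 Hd] := min_on_sphere (f := fun w => - qr N w) (g := fun w => - qr M' w)
  (fun x => continuousN (qr_cont N x)) (fun x => continuousN (qr_cont M' x)) Hneg.
have [Dm HDm] := max_on_sphere (fun x => continuousN (qr_cont M' x)).
pose B := `|Dm| / d.
have B0 : 0 <= B by rewrite divr_ge0 // ltW.
have Bd : B * d = `|Dm| by rewrite /B divfK // gt_eqF.
have HB : forall w, `|w| = 1 -> qr N w < 0 -> qr M' w / qr N w <= B.
  move=> w w1 nw.
  have E : qr M' w / qr N w * qr N w = qr M' w by rewrite divfK // lt_eqF.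
  move: E; set x := qr M' w / qr N w => E.
  have [mp|mn] := ltP 0 (qr M' w).
    nra.
  have h2 : - qr M' w <= `|Dm| := le_trans (HDm w w1) (ler_norm Dm).
  have h1' : d <= - qr N w by apply: Hd => //=; rewrite oppr_ge0.
  nra.
pose SB := [set x : R | x = 0 \/ exists w, [/\ `|w| = 1, qr N w < 0 &
   x = qr M' w / qr N w]].
have hs : has_sup SB.
  split; first by exists 0; left.
  exists B => x [->|[w [w1 nw ->]]] //; exact: HB.
pose a := sup SB.
have a0 : 0 <= a by apply: sup_upper_bound => //; left.
have Hup : forall w, `|w| = 1 -> qr N w < 0 -> qr M' w / qr N w <= a.
  by move=> w w1 nw; apply: sup_upper_bound => //; right; exists w.
have Hlow : forall u, `|u| = 1 -> 0 < qr N u -> a <= qr M' u / qr N u.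
  move=> u u1 nu; apply: ge_sup; first by exists 0; left.
  move=> x [->|[w [w1 nw ->]]].
    by rewrite divr_ge0 // ltW // H1 // ltW.
  exact: twoD.
exists a; split => //; apply: sphere_pos => w w1.
have -> : qr (M - a *: N) w = (qr M' w - a * qr N w) + e * qr 1 w.
  by rewrite /M' !qrB; ring.
have h1 : 0 < e * qr 1 w by rewrite mulr_gt0 // qr1_gt0 // sphere_neq0.
suff : 0 <= qr M' w - a * qr N w by lra.
have [nw|nw|nw] := ltgtP (qr N w) 0.
- have E : qr M' w / qr N w * qr N w = qr M' w by rewrite divfK // lt_eqF.
  have := Hup w w1 nw; move: E; set x := qr M' w / qr N w => E h; nra.
- have E : qr M' w / qr N w * qr N w = qr M' w by rewrite divfK // gt_eqF.
  have := Hlow w w1 nw; move: E; set x := qr M' w / qr N w => E h; nra.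
- by rewrite nw mulr0 subr0 ltW // H2 ?sphere_neq0 // nw.
Qed.

End An.

Section Mx.
Variable R : realType.

Lemma unit_of_nd r (A : 'M[R]_r) : ndmx A -> A \in unitmx.
Proof.
move=> nd; rewrite -row_free_unit -kermx_eq0; apply/negPn/negP.
move=> /matrix0Pn [i [j nz]].
pose u := row i (kermx A).
have u0 : u^T != 0.
  apply/negP => /eqP u0; move: nz; have := congr1 (fun M : 'M[R]_(r,1) => M j 0) u0.
  by rewrite !mxE => ->; rewrite eqxx.
have := nd _ u0; rewrite trmxK.
have -> : u *m A = 0 by rewrite /u -row_mul mulmx_ker row0.
by rewrite mul0mx mxE ltxx.
Qed.

Lemma mpinv_inv r (A : 'M[R]_r) : A \in unitmx -> mpinv A = invmx A.
Proof.
move=> uA.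
have P : is_mpinv A (invmx A).
  by split; rewrite ?mulmxV ?mulVmx ?mul1mx ?mulmx1 ?trmx1.
have := xgetI 0 P; rewrite -/(mpinv A) => -[h1 _ _ _].
have E : invmx A *m (A *m mpinv A *m A) *m invmx A = mpinv A.
  by rewrite !mulmxA mulVmx // mul1mx -mulmxA mulmxV // mulmx1.
by rewrite -E h1 mulVmx // mul1mx.
Qed.

Lemma block_id q r p (N : 'M[R]_(q + r)) (X : 'M[R]_(q, p)) (Y : 'M[R]_(r, p)) :
  symmx N -> drsubmx N \in unitmx ->
  (col_mx X Y)^T *m N *m col_mx X Y =
  X^T *m (ulsubmx N - ursubmx N *m invmx (drsubmx N) *m dlsubmx N) *m X +
  (Y + invmx (drsubmx N) *m dlsubmx N *m X)^T *m drsubmx N *m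
    (Y + invmx (drsubmx N) *m dlsubmx N *m X).
Proof.
move=> sN uD.
set N11 := ulsubmx N; set N12 := ursubmx N; set N21 := dlsubmx N.
set N22 := drsubmx N; set K := invmx N22 *m N21.
have t21 : N21^T = N12 by rewrite /N21 trmx_dlsub sN.
have t22 : N22^T = N22 by rewrite /N22 trmx_drsub sN.
have e1 : (Y + K *m X)^T *m N22 = Y^T *m N22 + X^T *m N12.
  rewrite linearD /= mulmxDl; congr (_ + _).
  by rewrite !trmx_mul /K trmx_inv t22 t21 -!mulmxA mulVmx // mulmx1.
have e2 : N22 *m K = N21 by rewrite /K mulmxA mulmxV // mul1mx.
rewrite -{1}(submxK N) -/N11 -/N12 -/N21 -/N22 tr_col_mx mul_row_block mul_row_col.
rewrite e1 mulmxBr mulmxBl !mulmxDl !mulmxDr !mulmxA.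
rewrite (mulmxK uD).
set a := X^T *m N11 *m X; set b := Y^T *m N21 *m X; set c := X^T *m N12 *m Y.
set d := Y^T *m N22 *m Y; set e := X^T *m N12 *m invmx N22 *m N21 *m X.
rewrite [d + b]addrC [c + e]addrC -!addrA; congr (_ + _).
rewrite addrCA; congr (_ + _); by rewrite addrCA addKr addrC.
Qed.

Lemma qfE k (A : 'M[R]_k) (x : 'cV[R]_k) : (x^T *m A *m x) 0 0 = qr A x^T.
Proof. by rewrite /qr trmxK. Qed.

Lemma Slemma_cV k (M N : 'M[R]_k) :
  (forall x : 'cV[R]_k, x != 0 -> 0 <= (x^T *m N *m x) 0 0 ->
     0 < (x^T *m M *m x) 0 0) ->
  exists a, 0 <= a /\ pdmx (M - a *: N).
Proof.
move=> H.
have [|a [a0 Ha]] := @Slemma_rV R k M N.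
  move=> w w0; have := H w^T; rewrite !qfE trmxK; apply.
  by rewrite trmx_eq0.
exists a; split => // x x0; rewrite qfE; apply: Ha; by rewrite trmx_eq0.
Qed.

Lemma qfS k l (A : 'M[R]_k) (S : 'M[R]_(k, l)) (x : 'cV[R]_l) :
  x^T *m (S^T *m A *m S) *m x = (S *m x)^T *m A *m (S *m x).
Proof. by rewrite trmx_mul !mulmxA. Qed.

Lemma stackI_mul q r (Z : 'M[R]_(r, q)) (x : 'cV[R]_q) :
  stackI Z *m x = col_mx x (Z *m x).
Proof. by rewrite /stackI mul_col_mx mul1mx. Qed.

Lemma part1 q r (M N : 'M[R]_(q + r)) :
  (exists a, 0 <= a /\ pdmx (M - a *: N)) ->
  forall Z, Zset N Z -> Zplus M Z.
Proof.
move=> [a [a0 Ha]] Z HZ x x0.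
rewrite qfS.
have y0 : stackI Z *m x != 0.
  by rewrite stackI_mul col_mx_eq0 negb_and x0.
have := Ha _ y0; have := HZ x; rewrite qfS.
rewrite mulmxBr mulmxBl -scalemxAr -scalemxAl !mxE => h1 h2.
have := mulr_ge0 a0 h1; lra.
Qed.

Lemma cs_psd q (P : 'M[R]_q) (x v : 'cV[R]_q) :
  P^T = P -> psdmx P -> 0 < (x^T *m P *m x) 0 0 ->
  ((x^T *m P *m v) 0 0) ^+ 2 <= (v^T *m P *m v) 0 0 * (x^T *m P *m x) 0 0.
Proof.
move=> sP HP pp.
set p := (x^T *m P *m x) 0 0; set s := (x^T *m P *m v) 0 0.
set t := (v^T *m P *m v) 0 0.
have svx : (v^T *m P *m x) 0 0 = s.
  transitivity (((v^T *m P *m x)^T) 0 0); first by rewrite [RHS]mxE.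
  by rewrite !trmx_mul trmxK sP mulmxA.
have := HP (p *: v - s *: x); rewrite qfE linearB /= !linearZ /=.
rewrite scalerN -scaleNr qrD !qrZ !blZl !blZr /bl !trmxK -!qfE svx -/s -/p -/t.
move=> h.
have : 0 <= p * (p * t - s ^+ 2) by nra.
by rewrite pmulr_rge0 // subr_ge0 mulrC.
Qed.

Lemma part2 q r (M N : 'M[R]_(q + r)) : PiSet N -> ndmx (drsubmx N) ->
  (forall Z, Zset N Z -> Zplus M Z) ->
  forall w : 'cV[R]_(q + r), w != 0 -> 0 <= (w^T *m N *m w) 0 0 ->
    0 < (w^T *m M *m w) 0 0.
Proof.
move=> [sN Hneg HP _] nd H w w0 Nw.
have uD := unit_of_nd nd.
pose Ni := invmx (drsubmx N).
pose K := Ni *m dlsubmx N.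
pose P := ulsubmx N - ursubmx N *m Ni *m dlsubmx N.
have EP : gschur N = P by rewrite /gschur mpinv_inv.
rewrite EP in HP.
have sP : P^T = P.
  rewrite /P linearB /= !trmx_mul trmx_inv trmx_ulsub trmx_ursub trmx_dlsub.
  by rewrite trmx_drsub sN mulmxA.
pose x := usubmx w; pose y := dsubmx w.
have Ew : w = col_mx x y by rewrite vsubmxK.
pose e := y + K *m x.
have Nw' : 0 <= (x^T *m P *m x) 0 0 + (e^T *m drsubmx N *m e) 0 0.
  by move: Nw; rewrite Ew block_id // mxE => h; exact: h.
have qe0 : (e^T *m drsubmx N *m e) 0 0 <= 0.
  by have := Hneg e; rewrite mulmxN mulNmx mxE oppr_ge0.
have p0 := HP x.
have ZE : forall Z, (stackI Z)^T *m N *m stackI Z =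
    P + (Z + K)^T *m drsubmx N *m (Z + K).
  by move=> Z; rewrite /stackI block_id // trmx1 mul1mx !mulmx1.
have fin : forall Z, Zset N Z -> Z *m x = y -> x != 0 ->
    0 < (w^T *m M *m w) 0 0.
  move=> Z HZ Zx x0; have := H Z HZ x x0.
  by rewrite qfS stackI_mul Zx -Ew.
have [pp|pn] := ltP 0 ((x^T *m P *m x) 0 0); last first.
  have e0 : e = 0.
    apply/eqP; apply/negP => /negP e0.
    have := nd e e0; lra.
  have yE : y = - (K *m x).
    by apply/eqP; rewrite -addr_eq0; apply/eqP.
  have x0 : x != 0.
    apply/negP => /eqP x0; move: w0; rewrite Ew yE x0 mulmx0 oppr0.
    by rewrite col_mx0 eqxx.
  apply: (fin (- K)) => //; last by rewrite mulNmx.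
  by rewrite /Zset ZE addNr trmx0 !mul0mx addr0.
set p := (x^T *m P *m x) 0 0 in pp p0 Nw'.
set qe := (e^T *m drsubmx N *m e) 0 0 in Nw' qe0.
pose D := p^-1 *: (e *m (x^T *m P)).
have x0 : x != 0.
  by apply/negP => /eqP x0; move: pp; rewrite /p x0 mulmx0 mxE ltxx.
apply: (fin (D - K)) => //.
  rewrite /Zset ZE subrK => v.
  rewrite mulmxDr mulmxDl mxE qfS.
  have Dv : D *m v = (p^-1 * (x^T *m P *m v) 0 0) *: e.
    rewrite /D -scalemxAl -[e *m _ *m v]mulmxA {1}[x^T *m P *m v]mx11_scalar.
    by rewrite mul_mx_scalar scalerA.
  have qZ : forall c (z : 'cV[R]_r), ((c *: z)^T *m drsubmx N *m (c *: z)) 0 0 = c ^+ 2 * (z^T *m drsubmx N *m z) 0 0.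
    by move=> c z; rewrite !qfE linearZ /= qrZ.
  rewrite Dv qZ -/qe.
  have cs := cs_psd v sP HP pp.
  rewrite -/p in cs.
  set s := (x^T *m P *m v) 0 0 in cs *.
  set t := (v^T *m P *m v) 0 0 in cs *.
  set c := p^-1 * s.
  have cp : c * p = s by rewrite /c mulrAC mulVf ?mul1r // gt_eqF.
  have cs2 : c * s * p <= t * p by rewrite mulrAC cp -expr2.
  have cst : c * s <= t by rewrite -(ler_pM2r pp).
  have c2 : 0 <= c ^+ 2 by rewrite sqr_ge0.
  have : c ^+ 2 * (- p) <= c ^+ 2 * qe by apply: (ler_wpM2l c2); lra.
  nra.
have Dx : D *m x = e.
  rewrite /D -scalemxAl -[e *m _ *m x]mulmxA [x^T *m P *m x]mx11_scalar -/p.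
  by rewrite mul_mx_scalar scalerA mulVf ?scale1r // gt_eqF.
by rewrite mulmxBl Dx /e addrK.
Qed.

End Mx.

Unset Implicit Arguments.
Close Scope classical_set_scope.

Theorem mainTheorem10 (R : realType) (q r : nat) (M N : 'M[R]_(q + r)) :
  symmx M -> symmx N ->
  ((exists alpha : R, 0 <= alpha /\ pdmx (M - alpha *: N)) ->
     forall Z : 'M[R]_(r, q), Zset N Z -> Zplus M Z) /\
  (PiSet N -> ndmx (drsubmx N) ->
     ((forall Z : 'M[R]_(r, q), Zset N Z -> Zplus M Z) <->
      (exists alpha : R, 0 <= alpha /\ pdmx (M - alpha *: N)))).
Proof.
move=> sM sN; split; first exact: part1.
move=> PN nd; split; last exact: part1.
move=> H; apply: Slemma_cV; exact: part2 PN nd H.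
Qed.
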